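(* Let $\mathcal H$ be a complex separable Hilbert space and let $T \in \mathcal B(\mathcal H)$ with polar decomposition $T = V|T|$. Then $$\|T - V\| = \min\{\|T - X\| : X \in \mathcal I,\ \ker(X) = \ker(T)\}.$$
   Context: $\mathcal B(\mathcal H)$ is the algebra of bounded linear operators on $\mathcal H$, and $\|\cdot\|$ is the operator norm. $\mathcal I$ denotes the set of all partial isometries on $\mathcal H$, i.e. $X \in \mathcal B(\mathcal H)$ with $XX^*X = X$. $|T| = (T^*T)^{1/2}$. The polar factor of $T$ is the unique $V \in \mathcal I$ with $T = V|T|$ and $\ker V = \ker T$. *)

(* Defs.v *)
From HB Require Import structures.
From mathcomp Require Import all_boot all_order all_algebra.
From mathcomp Require Import complex.
From mathcomp Require Import boolp classical_sets reals.
Set Implicit Arguments. Unset Strict Implicit. Unset Printing Implicit Defensive.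
Import Order.TTheory GRing.Theory Num.Theory.
Local Open Scope ring_scope.
Local Open Scope classical_set_scope.

Section Hilbert.
Variables (R : realType) (H : lmodType R[i]) (ip : H -> H -> R[i]).

Definition hnorm (x : H) : R := Num.sqrt (complex.Re (ip x x)).

Definition is_inner_product : Prop :=
  [/\ forall (a : R[i]) (x y z : H), ip (a *: x + y) z = a * ip x z + ip y z,
      forall x y : H, ip y x = (ip x y)^*,
      forall x : H, 0 <= ip x x &
      forall x : H, ip x x = 0 -> x = 0].

Definition hcauchy (u : nat -> H) : Prop :=
  forall e : R, 0 < e -> exists N : nat, forall m n : nat,
    (N <= m)%N -> (N <= n)%N -> hnorm (u m - u n) < e.

Definition hconverges_to (u : nat -> H) (l : H) : Prop :=
  forall e : R, 0 < e -> exists N : nat, forall n : nat, (N <= n)%N -> hnorm (u n - l) < e.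

Definition hcomplete : Prop :=
  forall u : nat -> H, hcauchy u -> exists l : H, hconverges_to u l.

Definition hseparable : Prop :=
  exists d : nat -> H, forall (x : H) (e : R), 0 < e -> exists n : nat, hnorm (x - d n) < e.

Definition is_separable_hilbert : Prop :=
  [/\ is_inner_product, hcomplete & hseparable].

Definition bounded_op (T : H -> H) : Prop :=
  (forall (a : R[i]) (x y : H), T (a *: x + y) = a *: T x + T y) /\
  exists M : R, forall x : H, hnorm (T x) <= M * hnorm x.

Definition opnorm (T : H -> H) : R :=
  sup [set hnorm (T x) | x in [set x : H | hnorm x <= 1]].

Definition is_adjoint (T Ts : H -> H) : Prop :=
  forall x y : H, ip (T x) y = ip x (Ts y).

Definition partial_isometry (X : H -> H) : Prop :=
  bounded_op X /\ exists Xs : H -> H,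
    bounded_op Xs /\ is_adjoint X Xs /\ forall x : H, X (Xs (X x)) = X x.

Definition same_kernel (X T : H -> H) : Prop :=
  forall x : H, X x = 0 <-> T x = 0.

Definition is_abs_op (T S : H -> H) : Prop :=
  bounded_op S /\ (forall x : H, 0 <= ip (S x) x) /\
  exists Ts : H -> H, bounded_op Ts /\ is_adjoint T Ts /\
    forall x : H, S (S x) = Ts (T x).

Definition polar_factor (T V : H -> H) : Prop :=
  partial_isometry V /\
  (exists S : H -> H, is_abs_op T S /\ forall x : H, T x = V (S x)) /\
  same_kernel V T.

End Hilbert.

(* Main.v *)
Require Import Defs.
From HB Require Import structures.
From mathcomp Require Import all_boot all_order all_algebra.
From mathcomp Require Import complex.
From mathcomp Require Import boolp classical_sets reals.
From mathcomp Require Import ring lra.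
Import Order.TTheory GRing.Theory Num.Theory.
Local Open Scope ring_scope.
Local Open Scope classical_set_scope.

Local Notation cRe := complex.Re.
Local Notation cIm := complex.Im.

Section Cx.
Variable R : realType.
Implicit Types x y z : R[i].
Lemma conjE x : x^* = conjc x. Proof. by []. Qed.
Lemma ReD x y : cRe (x + y) = cRe x + cRe y. Proof. by case: x; case: y. Qed.
Lemma ImD x y : cIm (x + y) = cIm x + cIm y. Proof. by case: x; case: y. Qed.
Lemma ReN x : cRe (- x) = - cRe x. Proof. by case: x. Qed.
Lemma ImN x : cIm (- x) = - cIm x. Proof. by case: x. Qed.
Lemma ReB x y : cRe (x - y) = cRe x - cRe y. Proof. by rewrite ReD ReN. Qed.
Lemma ImB x y : cIm (x - y) = cIm x - cIm y. Proof. by rewrite ImD ImN. Qed.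
Lemma ReJ x : cRe (x^*) = cRe x. Proof. by case: x. Qed.
Lemma ImJ x : cIm (x^*) = - cIm x. Proof. by case: x. Qed.
Lemma ReMr (s : R) x : cRe ((s%:C)%C * x) = s * cRe x.
Proof. case: x => a b /=. by rewrite mul0r subr0. Qed.
Lemma ImMr (s : R) x : cIm ((s%:C)%C * x) = s * cIm x.
Proof. case: x => a b /=. by rewrite mul0r addr0. Qed.
Lemma ReMi x : cRe ('i%C * x) = - cIm x.
Proof. case: x => a b /=. by rewrite mul0r mul1r sub0r. Qed.
Lemma ImMi x : cIm ('i%C * x) = cRe x.
Proof. case: x => a b /=. by rewrite mul0r mul1r add0r. Qed.
Lemma conjiE : ('i%C : R[i])^* = - 'i%C. Proof. by apply/eqP; rewrite eq_complex /= oppr0 !eqxx. Qed.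
Lemma conjR (s : R) : ((s%:C)%C)^* = (s%:C)%C. Proof. by apply/eqP; rewrite eq_complex /= oppr0 !eqxx. Qed.
Lemma cx_eq x y : cRe x = cRe y -> cIm x = cIm y -> x = y.
Proof. by case: x; case: y => ? ? ? ? /= -> ->. Qed.
Lemma ge0_real x : 0 <= x -> x = ((cRe x)%:C)%C.
Proof. move=> h; apply: cx_eq => //=. by move: h; rewrite lecE => /andP[/eqP ->]. Qed.
Lemma ge0_Re x : 0 <= x -> 0 <= cRe x.
Proof. by rewrite lecE => /andP[]. Qed.
End Cx.
Lemma discr (R : realType) (a b d : R) : 0 <= a -> 0 <= d ->
  (forall s, 0 <= a - 2 * s * b + s ^+ 2 * d) -> b ^+ 2 <= a * d.
Proof.
move=> ha hd hs.
have [d0|dpos] := eqVneq d 0.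
  have [b0|bn0] := eqVneq b 0; first by rewrite b0 d0; lra.
  have := hs ((a + 1) / (2 * b)); rewrite d0.
  have -> : 2 * ((a + 1) / (2 * b)) * b = a + 1.
    by field; rewrite bn0 /=.
  lra.
have dp : 0 < d by rewrite lt_neqAle eq_sym dpos hd.
have := hs (b / d).
have -> : a - 2 * (b / d) * b + (b / d) ^+ 2 * d = (a * d - b ^+ 2) / d.
  by field; rewrite dpos.
rewrite pmulr_lge0 ?invr_gt0 //; lra.
Qed.

Section IP.
Variables (R : realType) (H : lmodType R[i]) (ip : H -> H -> R[i]).
Hypothesis hip : is_inner_product ip.
Local Notation ReD := (@ReD R).
Local Notation ImD := (@ImD R).
Local Notation ReN := (@ReN R).
Local Notation ImN := (@ImN R).
Local Notation ReB := (@ReB R).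
Local Notation ImB := (@ImB R).
Local Notation ReJ := (@ReJ R).
Local Notation ImJ := (@ImJ R).
Local Notation ReMr := (@ReMr R).
Local Notation ImMr := (@ImMr R).
Local Notation ReMi := (@ReMi R).
Local Notation ImMi := (@ImMi R).
Local Notation conjiE := (@conjiE R).
Local Notation conjR := (@conjR R).
Local Notation cx_eq := (@cx_eq R).
Local Notation ge0_real := (@ge0_real R).
Local Notation ge0_Re := (@ge0_Re R).
Local Notation conjE := (@conjE R).
Local Notation rs s := ((s%:C)%C : R[i]).
Implicit Types x y z u v w : H.

Lemma ipAx a x y z : ip (a *: x + y) z = a * ip x z + ip y z.
Proof. by case: hip. Qed.
Lemma ipC x y : ip y x = (ip x y)^*.
Proof. by case: hip. Qed.
Lemma ipxx_ge0 x : 0 <= ip x x.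
Proof. by case: hip. Qed.
Lemma ipxx_eq0 x : ip x x = 0 -> x = 0.
Proof. by case: hip => _ _ _; apply. Qed.

Lemma ip0l z : ip 0 z = 0.
Proof.
have := ipAx 1 0 0 z; rewrite scaler0 addr0 mul1r => h.
by apply: (addrI (ip 0 z)); rewrite addr0 -h.
Qed.
Lemma ipDl x y z : ip (x + y) z = ip x z + ip y z.
Proof. by rewrite -[x]scale1r ipAx mul1r scale1r. Qed.
Lemma ipZl a x z : ip (a *: x) z = a * ip x z.
Proof. by rewrite -[a *: x]addr0 ipAx ip0l addr0. Qed.
Lemma ipNl x z : ip (- x) z = - ip x z.
Proof. by rewrite -scaleN1r ipZl mulN1r. Qed.
Lemma ipBl x y z : ip (x - y) z = ip x z - ip y z.
Proof. by rewrite ipDl ipNl. Qed.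
Lemma ip0r z : ip z 0 = 0.
Proof. by rewrite ipC ip0l conjC0. Qed.
Lemma ipDr x y z : ip z (x + y) = ip z x + ip z y.
Proof. by rewrite ipC ipDl rmorphD (ipC x z) (ipC y z). Qed.
Lemma ipZr a x z : ip z (a *: x) = a^* * ip z x.
Proof. by rewrite ipC ipZl rmorphM (ipC x z). Qed.
Lemma ipNr x z : ip z (- x) = - ip z x.
Proof. by rewrite ipC ipNl rmorphN (ipC x z). Qed.
Lemma ipBr x y z : ip z (x - y) = ip z x - ip z y.
Proof. by rewrite ipDr ipNr. Qed.

Definition nn x := cRe (ip x x).
Lemma nn_ge0 x : 0 <= nn x.
Proof. exact/ge0_Re/ipxx_ge0. Qed.
Lemma ipxx x : ip x x = rs (nn x).
Proof. exact/ge0_real/ipxx_ge0. Qed.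
Lemma nn_eq0 x : nn x = 0 -> x = 0.
Proof. by move=> h; apply: ipxx_eq0; rewrite ipxx h. Qed.
Lemma ReipC x y : cRe (ip y x) = cRe (ip x y).
Proof. by rewrite ipC ReJ. Qed.

Lemma expand a b c d (s : R) :
  cRe (ip (a - rs s *: b) (c - rs s *: d)) =
  cRe (ip a c) - s * cRe (ip b c) - s * cRe (ip a d) + s ^+ 2 * cRe (ip b d).
Proof.
rewrite !ipBl !ipBr !ipZl !ipZr conjR !ReB !ReMr. ring.
Qed.

Lemma CS u v : cRe (ip u v) ^+ 2 <= nn u * nn v.
Proof.
apply: discr; [exact: nn_ge0|exact: nn_ge0|] => s.
have := nn_ge0 (u - rs s *: v); rewrite /nn expand (ReipC v u).
by congr (0 <= _); ring.
Qed.

Lemma hnormE x : hnorm ip x = Num.sqrt (nn x). Proof. by []. Qed.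
Lemma hnorm_ge0 x : 0 <= hnorm ip x. Proof. exact: sqrtr_ge0. Qed.
Lemma hnorm_sq x : hnorm ip x ^+ 2 = nn x.
Proof. by rewrite hnormE sqr_sqrtr // nn_ge0. Qed.

Lemma CS' u v : cRe (ip u v) <= hnorm ip u * hnorm ip v.
Proof.
rewrite !hnormE -sqrtrM ?nn_ge0 //.
apply: (le_trans (ler_norm _)).
rewrite -sqrtr_sqr; apply: ler_wsqrtr; exact: CS.
Qed.

Lemma nnD u v : nn (u + v) = nn u + 2 * cRe (ip u v) + nn v.
Proof. rewrite /nn !ipDl !ipDr !ReD (ReipC u v). ring. Qed.
Lemma nnB u v : nn (u - v) = nn u - 2 * cRe (ip u v) + nn v.
Proof. rewrite /nn !ipBl !ipBr !ReB ?ReD (ReipC u v). ring. Qed.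

Lemma le_hnorm x (c : R) : 0 <= c -> nn x <= c ^+ 2 -> hnorm ip x <= c.
Proof.
move=> c0 h; rewrite hnormE -(ger0_norm c0) -sqrtr_sqr; exact: ler_wsqrtr.
Qed.

Lemma hnormD u v : hnorm ip (u + v) <= hnorm ip u + hnorm ip v.
Proof.
apply: le_hnorm; first by rewrite addr_ge0 ?hnorm_ge0.
rewrite nnD -!hnorm_sq; have := CS' u v; lra.
Qed.

Lemma nnZr (s : R) x : nn (rs s *: x) = s ^+ 2 * nn x.
Proof. rewrite /nn ipZl ipZr conjR !ReMr; ring. Qed.

Local Notation hn := (hnorm ip).
Definition lin (T : H -> H) := forall a x y, T (a *: x + y) = a *: T x + T y.

Lemma lin0 T : lin T -> T 0 = 0.
Proof.
move=> l; have := l 1 0 0; rewrite scaler0 addr0 scale1r => h.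
by apply: (addrI (T 0)); rewrite addr0 -h.
Qed.
Lemma linD T : lin T -> forall x y, T (x + y) = T x + T y.
Proof. by move=> l x y; have := l 1 x y; rewrite !scale1r. Qed.
Lemma linZ T : lin T -> forall a x, T (a *: x) = a *: T x.
Proof. by move=> l a x; have := l a x 0; rewrite !addr0 lin0 // addr0. Qed.
Lemma linN T : lin T -> forall x, T (- x) = - T x.
Proof. by move=> l x; rewrite -scaleN1r linZ // scaleN1r. Qed.
Lemma linB T : lin T -> forall x y, T (x - y) = T x - T y.
Proof. by move=> l x y; rewrite linD // linN. Qed.

Lemma nn0 : nn 0 = 0.
Proof. by rewrite /nn ip0l. Qed.
Lemma hn0 : hn 0 = 0.
Proof. by rewrite hnormE nn0 sqrtr0. Qed.
Lemma nnN x : nn (- x) = nn x.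
Proof. by rewrite /nn ipNl ipNr opprK. Qed.
Lemma hnN x : hn (- x) = hn x.
Proof. by rewrite !hnormE nnN. Qed.
Lemma hnZr (s : R) x : hn (rs s *: x) = `|s| * hn x.
Proof. by rewrite !hnormE nnZr sqrtrM ?sqr_ge0 // sqrtr_sqr. Qed.
Lemma hn_eq0 x : hn x = 0 -> x = 0.
Proof.
move=> h; apply: nn_eq0; by rewrite -hnorm_sq h expr0n.
Qed.
Lemma hnB x y : hn (x - y) <= hn x + hn y.
Proof. by rewrite -(hnN y) hnormD. Qed.
Lemma hn_mul x : hn x * hn x = nn x.
Proof. by rewrite -expr2 hnorm_sq. Qed.
Arguments lin0 {T}. Arguments linD {T}. Arguments linZ {T}. Arguments linN {T}. Arguments linB {T}.
Arguments hn_eq0 {x}. Arguments nn_eq0 {x}.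
Lemma zid (a b c d : H) : a - b - (c - d) = a - c - (b - d).
Proof. by rewrite !opprB !addrA (addrAC a (- b) d) (addrAC a (- c) d) (addrAC (a + d) (- c)). Qed.
Lemma keyid (G : H -> H) (lG : lin G) (z w : H) (al be : R[i]) : w = G z - be *: z ->
  G (z - al *: w) - be *: (z - al *: w) = w - al *: (G w - be *: w).
Proof.
move=> hw; rewrite (linB lG) (linZ lG) !scalerBr (scalerA be al w) (mulrC be al) -(scalerA al be w).
set q := al *: G w; set r := al *: (be *: w).
rewrite hw; exact: zid.
Qed.
Arguments keyid {G} lG {z w al be}.

Section Main.
Variables (T V X S Ts Vs Xs : H -> H).
Hypotheses (lT : lin T) (lV : lin V) (lX : lin X) (lS : lin S).
Hypotheses (adjT : is_adjoint ip T Ts) (adjV : is_adjoint ip V Vs) (adjX : is_adjoint ip X Xs).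
Hypotheses (pV : forall x, V (Vs (V x)) = V x) (pX : forall x, X (Xs (X x)) = X x).
Hypotheses (Spos : forall x, 0 <= ip (S x) x) (SS : forall x, S (S x) = Ts (T x)).
Hypotheses (TVS : forall x, T x = V (S x)).
Hypotheses (kV : same_kernel V T) (kX : same_kernel X T).

Lemma ji1 : ('i%C : R[i]) * ('i%C)^* = 1.
Proof. apply/eqP; rewrite eq_complex /=; apply/andP; split; apply/eqP; lra. Qed.

Lemma ImS x : cIm (ip (S x) x) = 0.
Proof. by rewrite (ge0_real _ (Spos x)). Qed.

Lemma Sadj x y : ip (S x) y = ip x (S y).
Proof.
rewrite (ipC (S y) x).
set a := ip (S x) y; set b := ip (S y) x.
have h1 := ImS (x + y).
rewrite linD // !ipDl !ipDr !ImD !ImS add0r addr0 -/a -/b in h1.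
have h2 := ImS (x + 'i%C *: y).
rewrite linD // linZ // !ipDl !ipDr !ipZl !ipZr !ImD !ImS -/a -/b in h2.
rewrite mulrA ji1 mul1r ImS conjiE mulNr ImN !ImMi in h2.
apply: cx_eq; rewrite ?ReJ ?ImJ; lra.
Qed.

Lemma nnT x : nn (T x) = nn (S x).
Proof. by rewrite /nn adjT -SS -Sadj. Qed.
Lemma hnT x : hn (T x) = hn (S x).
Proof. by rewrite !hnormE nnT. Qed.
Lemma kerS k : T k = 0 -> S k = 0.
Proof. by move=> h; apply: nn_eq0; rewrite -nnT h nn0. Qed.

Definition M y := forall k, T k = 0 -> ip k y = 0.
Lemma M_ip y k : M y -> T k = 0 -> ip y k = 0.
Proof. by move=> My Tk; rewrite ipC My // conjC0. Qed.
Arguments M_ip {y k}.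
Lemma MS z : M (S z).
Proof. by move=> k Tk; rewrite -Sadj kerS // ip0l. Qed.
Lemma MB y y' : M y -> M y' -> M (y - y').
Proof. by move=> h h' k Tk; rewrite ipBr h // h' // subr0. Qed.
Lemma MD y y' : M y -> M y' -> M (y + y').
Proof. by move=> h h' k Tk; rewrite ipDr h // h' // addr0. Qed.
Lemma MZ a y : M y -> M (a *: y).
Proof. by move=> h k Tk; rewrite ipZr h // mulr0. Qed.

Section PI.
Variables (W Ws : H -> H).
Hypotheses (lW : lin W) (adjW : is_adjoint ip W Ws) (pW : forall x, W (Ws (W x)) = W x)
  (kW : same_kernel W T).
Lemma PM z : M (Ws (W z)).
Proof. by move=> k Tk; rewrite -adjW; have /kW -> := Tk; rewrite ip0l. Qed.
Lemma Pker z : T (z - Ws (W z)) = 0.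
Proof. by apply/kW; rewrite linB // pW subrr. Qed.
Lemma isoM y : M y -> nn (W y) = nn y.
Proof.
move=> My; rewrite /nn adjW.
have -> : ip y y = ip y (Ws (W y)) + ip y (y - Ws (W y)).
  by rewrite ipBr addrC subrK.
by rewrite (M_ip My (Pker y)) addr0.
Qed.
Lemma nnP w : nn (Ws (W w)) <= nn w.
Proof.
have -> : nn w = nn (Ws (W w) + (w - Ws (W w))) by rewrite addrC subrK.
rewrite nnD (M_ip (PM w) (Pker w)).
have := nn_ge0 (w - Ws (W w)); rewrite /=; lra.
Qed.
Lemma WP w : W w = W (Ws (W w)).
Proof. by rewrite pW. Qed.
Lemma contr w : nn (W w) <= nn w.
Proof. rewrite WP isoM; [exact: nnP | exact: PM]. Qed.
End PI.
Arguments PM {W Ws}. Arguments Pker {W Ws}. Arguments isoM {W Ws}. Arguments nnP {W Ws}.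
Arguments WP {W Ws}. Arguments contr {W Ws}.

Hypotheses (bT : exists MT, forall x, hn (T x) <= MT * hn x)
  (bX : exists MX, forall x, hn (X x) <= MX * hn x).

Local Notation N := (opnorm ip (fun x => T x - X x)).
Definition E := [set hn (T x - X x) | x in [set x : H | hn x <= 1]].

Lemma NE : N = sup E. Proof. by []. Qed.

Lemma hasubE : has_ubound E.
Proof.
case: bT => MT hMT; case: bX => MX hMX.
exists (`|MT| + `|MX|) => _ [x /= hx <-].
apply: (le_trans (hnB _ _)); apply: lerD.
  apply: (le_trans (hMT x)); have := hnorm_ge0 x.
  have := ler_norm MT; have := normr_ge0 MT; nra.
apply: (le_trans (hMX x)); have := hnorm_ge0 x.
have := ler_norm MX; have := normr_ge0 MX; nra.
Qed.

Lemma N_ub x : hn x <= 1 -> hn (T x - X x) <= N.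
Proof. by move=> hx; rewrite NE; apply: (ub_le_sup hasubE); exists x. Qed.

Lemma N_ge0 : 0 <= N.
Proof.
have := @N_ub 0; rewrite hn0 (lin0 lT) (lin0 lX) subrr hn0; apply; exact: ler01.
Qed.

Lemma N_hom y : hn (T y - X y) <= N * hn y.
Proof.
have [h0|hn0'] := eqVneq (hn y) 0.
  by rewrite (hn_eq0 h0) (lin0 lT) (lin0 lX) subrr hn0 mulr0.
have hp : 0 < hn y by rewrite lt_neqAle eq_sym hn0' hnorm_ge0.
set s := (hn y)^-1.
have := @N_ub (rs s *: y).
rewrite hnZr (linZ lT) (linZ lX) -(scalerBr (rs s) (T y) (X y)) hnZr ger0_norm ?invr_ge0 ?hnorm_ge0 //.
rewrite mulVf // => /(_ (lexx _)).
rewrite /s ler_pdivrMl //. by rewrite mulrC.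
Qed.

Lemma L7 y : M y -> hn (S y) <= (1 + N) * hn y /\ (1 - N) * hn y <= hn (S y).
Proof.
move=> My.
have hX : hn (X y) = hn y by rewrite !hnormE (isoM lX adjX pX kX y My).
have h := N_hom y.
split.
  rewrite -hnT.
  have -> : T y = (T y - X y) + X y by rewrite subrK.
  apply: (le_trans (hnormD _ _)); rewrite hX; lra.
have : hn (X y) <= hn (T y) + hn (T y - X y).
  have e : X y = T y - (T y - X y) by rewrite opprB addrC subrK.
  rewrite {1}e; exact: hnB.
rewrite hX hnT; lra.
Qed.

Lemma L8 y : M y -> cRe (ip (S y) y) <= (1 + N) * nn y.
Proof.
move=> My; apply: (le_trans (CS' _ _)).
have [h _] := L7 _ My; rewrite -hn_mul mulrA.
apply: ler_wpM2r; first exact: hnorm_ge0.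
exact: h.
Qed.

Definition Sf y := cRe (ip (S y) y).
Lemma Sf_ge0 y : 0 <= Sf y. Proof. exact/ge0_Re/Spos. Qed.
Lemma Sf0 : Sf 0 = 0. Proof. by rewrite /Sf ip0r. Qed.
Lemma SfZ s y : Sf (rs s *: y) = s ^+ 2 * Sf y.
Proof. rewrite /Sf (linZ lS) ipZl ipZr conjR !ReMr; ring. Qed.

Lemma hn_nn1 z : nn z = 1 -> hn z = 1.
Proof. by move=> h; rewrite hnormE h sqrtr1. Qed.

Lemma normalize y : nn y != 0 -> exists s : R,
  nn (rs s *: y) = 1 /\ s ^+ 2 * nn y = 1.
Proof.
move=> ny; exists (hn y)^-1.
have hy : hn y != 0 by apply: contraNneq ny => h; rewrite -hnorm_sq h expr0n.
have e : (hn y)^-1 ^+ 2 * nn y = 1 by rewrite -hnorm_sq -exprMn mulVf // expr1n.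
by rewrite nnZr e.
Qed.
Arguments normalize {y}.
Arguments L8 {y}.

Definition F := [set Sf z | z in [set z | M z /\ nn z = 1]].
Local Notation m := (inf F).

Lemma F_lb : lbound F 0.
Proof. by move=> _ [z _ <-]; exact: Sf_ge0. Qed.

Lemma m_le y : M y -> m * nn y <= Sf y.
Proof.
move=> My; have [ny0|ny] := eqVneq (nn y) 0.
  by rewrite (nn_eq0 ny0) nn0 Sf0 mulr0.
have [s [h1 h2]] := normalize ny.
have : m <= Sf (rs s *: y).
  apply: (ge_inf (ex_intro _ 0 F_lb)); exists (rs s *: y) => //; split => //.
  exact: MZ.
rewrite SfZ => h.
have := nn_ge0 y; have := Sf_ge0 y; nra.
Qed.
Arguments m_le {y}.

Lemma L9 y : M y -> (1 - N) * nn y <= Sf y.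
Proof.
move=> My.
have [N1|N1] := leP 1 N.
  have := nn_ge0 y; have := Sf_ge0 y; nra.
have [ny0|ny] := eqVneq (nn y) 0.
  by rewrite ny0 mulr0 Sf_ge0.
suff cm : 1 - N <= m.
  have := m_le My; have := nn_ge0 y; nra.
have [s0 [h01 h02]] := normalize ny.
set z0 := rs s0 *: y.
have Mz0 : M z0 by exact: MZ.
have Fne : F !=set0 by exists (Sf z0); exists z0.
have m0 : 0 <= m by apply: lb_le_inf => //; exact: F_lb.
have hinf : has_inf F by split => //; exists 0; exact: F_lb.
rewrite leNgt; apply/negP => mc.
have mK : m <= 1 + N.
  have := ge_inf (ex_intro _ 0 F_lb) (ex_intro2 _ _ z0 (conj Mz0 h01) erefl).
  have := L8 Mz0; rewrite h01 mulr1 /Sf; lra.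
set K := 1 + N - m.
set d := 1 - N - m.
have dp : 0 < d by rewrite /d; lra.
have K0 : 0 <= K by rewrite /K; lra.
set eps := d ^+ 2 / (K + 1).
have epsp : 0 < eps by rewrite /eps divr_gt0 // ?exprn_gt0 //; lra.
have epsK : eps * (K + 1) = d ^+ 2 by rewrite /eps mulrVK // unitfE; apply/eqP; lra.
have [_ [z [Mz nz] <-] hz] := inf_adherent epsp hinf.
have mz : m <= Sf z by apply: (ge_inf (ex_intro _ 0 F_lb)); exists z.
set w := S z - rs m *: z.
have Mw : M w by apply: MB; [exact: MS | exact: MZ].
set b := nn w.
set a := Sf z - m.
set dd := Sf w - m * nn w.
have dd0 : 0 <= dd by have := m_le Mw; rewrite /dd; lra.
have ddK : dd <= K * b by have := L8 Mw; rewrite /dd /K /b; lra.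
have eqb : cRe (ip (S w - rs m *: w) z) = b.
  rewrite /b /nn ipBl ipZl Sadj ReB ReMr {2 4}/w ipBr ipZr conjR ReB ReMr.
  rewrite (ReipC z w) (ReipC (S z) w); done.
have eqa : cRe (ip w z) = a.
  by rewrite /w ipBl ipZl ReB ReMr -/(nn z) nz mulr1.
have disc : b ^+ 2 <= a * dd.
  apply: discr; [rewrite /a; lra | exact: dd0 |] => s.
  have Mu : M (z - rs s *: w) by apply: MB => //; exact: MZ.
  have := m_le Mu; rewrite -subr_ge0.
  have -> : Sf (z - rs s *: w) - m * nn (z - rs s *: w)
            = cRe (ip (w - rs s *: (S w - rs m *: w)) (z - rs s *: w)).
    rewrite /Sf /nn -ReMr -ReB -ipZl -ipBl.
    by rewrite (keyid lS (erefl w)).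
  rewrite expand eqa eqb -/(nn w) -/b -/dd.
  have -> : cRe (ip (S w - rs m *: w) w) = dd by rewrite /dd ipBl ipZl ReB ReMr.
  lra.
have bK : b <= a * K.
  have b0 : 0 <= b by exact: nn_ge0.
  have [b00|bp] := eqVneq b 0; first by rewrite b00; apply: mulr_ge0 => //; rewrite /a subr_ge0.
  have bpos : 0 < b by rewrite lt_neqAle eq_sym bp b0.
  have : b * b <= (a * K) * b.
    apply: (le_trans _ (le_trans disc _)); first by rewrite expr2.
    rewrite -mulrA; apply: ler_wpM2l; [rewrite /a; lra | exact: ddK].
  by rewrite ler_pM2r.
have hSz : 1 - N <= hn (S z).
  by have [_ ] := L7 _ Mz; rewrite hn_nn1 // mulr1.
have hSz2 : hn (S z) <= hn w + m.
  have e : S z = w + rs m *: z by rewrite /w subrK.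
  rewrite e; apply: (le_trans (hnormD _ _)).
  by rewrite hnZr (hn_nn1 _ nz) mulr1 ger0_norm.
have dw : d <= hn w by rewrite /d; lra.
have d2 : d ^+ 2 <= b.
  rewrite /b -hnorm_sq; have := hnorm_ge0 w; nra.
have aK : a * K <= eps * K.
  apply: ler_wpM2r => //; rewrite /a; lra.
nra.
Qed.

Lemma Cf_bounds u : M u -> - N * nn u <= Sf u - nn u <= N * nn u.
Proof.
move=> Mu; have := L8 Mu; have := L9 _ Mu; move=> h1 h2.
apply/andP; split; lra.
Qed.

Lemma L10 y : M y -> nn (S y - y) <= N ^+ 2 * nn y.
Proof.
move=> My.
set w := S y - rs 1 *: y.
have ew : S y - y = w by rewrite /w scale1r.
rewrite ew.
have Mw : M w by apply: MB; [exact: MS | exact: MZ].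
set b := nn w.
set A := cRe (ip w y).
set D := cRe (ip (S w - rs 1 *: w) w).
set e := cRe (ip y w).
have eqb : cRe (ip (S w - rs 1 *: w) y) = b.
  rewrite /b /nn ipBl ipZl Sadj ReB ReMr {2 4}/w ipBr ipZr conjR ReB ReMr.
  by rewrite (ReipC y w) (ReipC (S y) w).
have key : forall s, Sf (y - rs s *: w) - nn (y - rs s *: w) = A - 2 * s * b + s ^+ 2 * D.
  move=> s.
  have -> : Sf (y - rs s *: w) - nn (y - rs s *: w)
            = cRe (ip (w - rs s *: (S w - rs 1 *: w)) (y - rs s *: w)).
    rewrite -[nn _]mul1r /Sf /nn -ReMr -ReB -ipZl -ipBl.
    by rewrite (keyid lS (erefl w)).
  rewrite expand eqb -/(nn w) -/b -/A -/D; ring.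
have nnu : forall s, nn (y - rs s *: w) = nn y - 2 * s * e + s ^+ 2 * b.
  move=> s; rewrite /nn expand /e /b /nn (ReipC y w); ring.
have ineq : forall s, 0 <= N * nn y - 2 * s * b + s ^+ 2 * (N * b).
  move=> s.
  have M1 : M (y - rs s *: w) by apply: MB => //; exact: MZ.
  have M2 : M (y - rs (- s) *: w) by apply: MB => //; exact: MZ.
  have /andP[h1 _] := Cf_bounds _ M1.
  have /andP[_ h2] := Cf_bounds _ M2.
  rewrite !key !nnu in h1 h2.
  have e2 : (- s) ^+ 2 = s ^+ 2 by rewrite sqrrN.
  rewrite e2 in h2.
  nra.
have N0 := N_ge0.
have disc := @discr R _ _ _ (mulr_ge0 N0 (nn_ge0 y)) (mulr_ge0 N0 (nn_ge0 w)) ineq.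
have b0 : 0 <= b by exact: nn_ge0.
have [b00|bp] := eqVneq b 0.
  by rewrite -/b b00; apply: mulr_ge0; [exact: sqr_ge0|exact: nn_ge0].
have bpos : 0 < b by rewrite lt_neqAle eq_sym bp b0.
have : b * b <= (N ^+ 2 * nn y) * b by rewrite -expr2; apply: (le_trans disc); rewrite /b; nra.
by rewrite ler_pM2r.
Qed.

Lemma final x : hn x <= 1 -> hn (T x - V x) <= N.
Proof.
move=> hx.
set p := Vs (V x).
have Mp : M p := PM adjV kV x.
have Tk : T (x - p) = 0 := Pker lV pV kV x.
have Sk := kerS _ Tk.
have Vk : V (x - p) = 0 by apply/kV.
have ex : x = p + (x - p) by rewrite addrC subrK.
have -> : T x - V x = V (S p - p).
  rewrite TVS {1 2}ex (linD lS) Sk addr0 (linD lV) Vk addr0 (linB lV).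
  done.
apply: (le_trans (_ : hn (V (S p - p)) <= hn (S p - p))).
  rewrite !hnormE; apply: ler_wsqrtr; exact: (contr lV adjV pV kV).
apply: le_hnorm; first exact: N_ge0.
apply: (le_trans (L10 _ Mp)).
have hp := nnP lV adjV pV kV x.
have hx2 : nn x <= 1.
  rewrite -hnorm_sq; have := hnorm_ge0 x; nra.
have := N_ge0; have := nn_ge0 p; rewrite -/p in hp; nra.
Qed.

Lemma opnorm_le : opnorm ip (fun x => T x - V x) <= N.
Proof.
rewrite {1}/opnorm; apply: ge_sup.
  by exists (hn (T 0 - V 0)); exists 0 => //=; rewrite hn0 ler01.
by move=> _ [x hx <-]; exact: final.
Qed.
End Main. End IP.
Local Close Scope classical_set_scope.

Theorem corollary2p4 (R : realType) (H : lmodType R[i]) (ip : H -> H -> R[i])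
  (hH : is_separable_hilbert ip) (T V : H -> H)
  (hT : bounded_op ip T) (hV : polar_factor ip T V) :
  (partial_isometry ip V /\ same_kernel V T) /\
  forall X : H -> H, partial_isometry ip X -> same_kernel X T ->
    opnorm ip (fun x => T x - V x) <= opnorm ip (fun x => T x - X x).
Proof.
have hV' := hV.
case: hV => pV [[S [hS TVS]] kV].
split; first by [].
move=> X pX kX.
case: hH => hip _ _.
case: hT => lT bT.
case: pV => [[lV _] [Vs [_ [adjV pVV]]]].
case: pX => [[lX bX] [Xs [_ [adjX pXX]]]].
case: hS => [[lS _] [Spos [Ts [_ [adjT SS]]]]].
by apply: (@opnorm_le R H ip hip T V X S Ts Vs Xs).
Qed.
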